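(* Let $t_1,\dots,t_n$ be basic terms, $\kappa$ a time variable, and $\Delta$ the saturation of the sample set $\{t_1[\kappa],\dots,t_n[\kappa]\}$. Then $\mathbf{W}\not\models\mathrm{id}\le t_1\vee\cdots\vee t_n$ (i.e. there exist a valuation $\theta$ and $p\in\overline\omega$ with $[\![t_i]\!]_\theta(p)<p$ for all $i$) if, and only if, there exists a $\Delta$-diagram $\delta$ such that $\delta(\kappa)>\delta(t_i[\kappa])$ for all $i\in\{1,\dots,n\}$.
   Context: Time warps: $\overline{\omega}=\omega\cup\{\omega\}$ with its natural order; a time warp is a monotone $f\colon\overline\omega\to\overline\omega$ with $f(0)=0$, $f(\omega)=\bigvee_{n\in\omega}f(n)$; $W$ is the set of time warps ordered pointwise, $\vee$ pointwise join, $fg:=f\circ g$, $\mathrm{id}$ identity, $\bot$ constant $0$, $\top$ maps $p\neq0$ to $\omega$. Residuals $\backslash,/$ on $W$ satisfy $f\le h/g\iff fg\le h\iff g\le f\backslash h$; $f^{\ell}:=\mathrm{id}/f$, $f^{r}:=f\backslash\mathrm{id}$, $f^{o}:=\top\backslash f$. $\mathbf{W}$ denotes the time warp algebra $\langle W,\wedge,\vee,\circ,\backslash,/,\mathrm{id},\bot,\top\rangle$. Basic terms: $t,u::=x\mid tu\mid t^{o}\mid t^{\ell}\mid t^{r}\mid\mathrm{id}\mid\bot$ ($x$ a term variable). A valuation $\theta$ maps term variables to $W$; $[\![x]\!]_\theta=\theta(x)$, $[\![tu]\!]_\theta=[\![t]\!]_\theta[\![u]\!]_\theta$, $[\![t^{\star}]\!]_\theta=([\![t]\!]_\theta)^{\star}$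 for $\star\in\{o,\ell,r\}$, $[\![\mathrm{id}]\!]_\theta=\mathrm{id}$, $[\![\bot]\!]_\theta=\bot$. Samples: $\alpha::=\kappa\mid t[\alpha]\mid\mathsf{s}(\alpha)\mid\mathsf{p}(\alpha)\mid\mathsf{last}(t)$ ($\kappa$ a time variable, $t$ a basic term). Relation $\leadsto$: $t[\alpha]\leadsto\alpha$; $\mathsf{s}(\alpha)\leadsto\alpha$; $\mathsf{p}(\alpha)\leadsto\alpha$; $(tu)[\alpha]\leadsto t[u[\alpha]]$; $t^{o}[\alpha]\leadsto t[\alpha]$; $t^{r}[\alpha]\leadsto t[t^{r}[\alpha]], t[\mathsf{s}(t^{r}[\alpha])]$; $t^{\ell}[\alpha]\leadsto t[t^{\ell}[\alpha]], t[\mathsf{p}(t^{\ell}[\alpha])]$; $t[\alpha]\leadsto t[\mathsf{last}(t)]$. The saturation of a sample set is its closure under $\leadsto^{*}$ (reflexive transitive closure). For $p\in\overline\omega$: $p\ominus1=p-1$ if $p\in\omega\setminus\{0\}$, else $p$; $p\oplus1=p+1$ if $p\in\omega$, else $p$. For a saturated sample set $\Delta$, a $\Delta$-diagram is a map $\delta\colon\Delta\to\overline\omega$ such that (all samples mentioned belonging to $\Delta$): (S1) $\delta(\alpha)\le\delta(\beta)\Rightarrow\delta(t[\alpha])\le\delta(t[\beta])$; (S2) $\delta(\alpha)=0\Rightarrow\delta(t[\alpha])=0$; (S3) $\delta(\mathsf{p}(\alpha))=\delta(\alpha)\ominus1$; (S4) $\delta(\mathsf{s}(\alpha))=\delta(\alpha)\oplus1$;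 (S5) for $t[\alpha]\in\Delta$: $\delta(\mathsf{last}(t))\le\delta(\alpha)\iff\delta(t[\alpha])=\delta(t[\mathsf{last}(t)])$; (S6) $\delta(\mathsf{last}(t))=\omega\Rightarrow\delta(t[\mathsf{last}(t)])=\omega$; (L1) $\delta(\mathrm{id}[\alpha])=\delta(\alpha)$; (L2) if $\bot[\alpha]\in\Delta$ then $\delta(\mathsf{last}(\bot))=0$; (L3) $\delta((tu)[\alpha])=\delta(t[u[\alpha]])$; (L4) if $(tu)[\mathsf{last}(tu)]\in\Delta$ and $\delta(\mathsf{last}(tu))=\omega$ then $\delta(\mathsf{last}(t))=\delta(\mathsf{last}(u))=\omega$; (O1) $\delta(t^{o}[\alpha])\in\{0,\omega\}$; (O2) $\delta(\alpha)<\omega\Rightarrow(\delta(t^{o}[\alpha])=\omega\iff\delta(t[\alpha])=\omega)$; (O3) $\delta(\mathsf{last}(t^{o}))<\omega$; (O4) for $t[\alpha],t^{o}[\mathsf{last}(t^{o})]\in\Delta$: if $\delta(t^{o}[\mathsf{last}(t^{o})])<\omega$ and $\delta(\alpha)<\omega$ then $\delta(t[\alpha])<\omega$; (R1) $\delta(t[t^{r}[\alpha]])\le\delta(\alpha)$; (R2) for $t^{r}[\alpha]\in\Delta$: if $0<\delta(\alpha)<\omega$ and $\delta(t^{r}[\alpha])<\omega$ then $\delta(\alpha)<\delta(t[\mathsf{s}(t^{r}[\alpha])])$; (R3) for $t^{r}[\mathsf{last}(t^{r})]\in\Delta$: $\delta(\mathsf{last}(t^{r}))=\omega\Rightarrow\delta(\mathsf{last}(t))=\omega$;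 (R4) for $t^{r}[\mathsf{last}(t^{r})]\in\Delta$: $\delta(t^{r}[\mathsf{last}(t^{r})])<\omega\Rightarrow\delta(t[\mathsf{s}(t^{r}[\mathsf{last}(t^{r})])])=\omega$; (Λ1) for $t[t^{\ell}[\alpha]]\in\Delta$: $\delta(t^{\ell}[\alpha])<\omega\Rightarrow\delta(\alpha)\le\delta(t[t^{\ell}[\alpha]])$; (Λ2) for $t^{\ell}[\alpha]\in\Delta$: if $0<\delta(\alpha)<\omega$ and $\delta(t^{\ell}[\alpha])<\omega$ then $\delta(t[\mathsf{p}(t^{\ell}[\alpha])])<\delta(\alpha)$; (Λ3) for $t[t^{\ell}[\alpha]]\in\Delta$: if $\delta(\alpha)<\omega$ and $\delta(t^{\ell}[\alpha])=\omega$ then $\delta(t[t^{\ell}[\alpha]])<\delta(\alpha)$; (Λ4) for $t^{\ell}[\mathsf{last}(t^{\ell})]\in\Delta$: $\delta(\mathsf{last}(t^{\ell}))=\omega\Rightarrow\delta(\mathsf{last}(t))=\omega$; (Λ5) for $t^{\ell}[\mathsf{last}(t^{\ell})]\in\Delta$: $\delta(t^{\ell}[\mathsf{last}(t^{\ell})])<\omega\Rightarrow\delta(t[t^{\ell}[\mathsf{last}(t^{\ell})]])=\omega$. *)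

(* Defs.v *)
From Stdlib Require Import List Relations ClassicalEpsilon.
Import ListNotations.

(** * The ordinal omega-bar = omega + 1 *)
Inductive ob : Type := Fin (n : nat) | Om.

Definition oble (a b : ob) : Prop :=
  match a, b with
  | Fin m, Fin n => m <= n
  | _, Om => True
  | Om, Fin _ => False
  end.

Definition oblt (a b : ob) : Prop := oble a b /\ a <> b.

Definition ominus1 (p : ob) : ob :=
  match p with Fin (S n) => Fin n | _ => p end.
Definition oplus1 (p : ob) : ob :=
  match p with Fin n => Fin (S n) | Om => Om end.

Definition is_warp (f : ob -> ob) : Prop :=
  (forall a b, oble a b -> oble (f a) (f b)) /\
  f (Fin 0) = Fin 0 /\
  (forall n, oble (f (Fin n)) (f Om)) /\
  (forall b, (forall n, oble (f (Fin n)) b) -> oble (f Om) b).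

Definition wle (f g : ob -> ob) : Prop := forall p, oble (f p) (g p).
Definition wcomp (f g : ob -> ob) : ob -> ob := fun p => f (g p).
Definition wid : ob -> ob := fun p => p.
Definition wbot : ob -> ob := fun _ => Fin 0.
Definition wtop : ob -> ob := fun p => match p with Fin 0 => Fin 0 | _ => Om end.

(* Residuals in W, characterised by  f <= h/g <-> fg <= h <-> g <= f\h
   (for f, g, h in W); chosen by Hilbert's epsilon. *)
Definition rdiv (h g : ob -> ob) : ob -> ob :=
  epsilon (inhabits wid)
    (fun x => is_warp x /\
       forall y, is_warp y -> (wle y x <-> wle (wcomp y g) h)).
Definition ldiv (f h : ob -> ob) : ob -> ob :=
  epsilon (inhabits wid)
    (fun x => is_warp x /\
       forall y, is_warp y -> (wle y x <-> wle (wcomp f y) h)).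

Definition wl (f : ob -> ob) := rdiv wid f.
Definition wr (f : ob -> ob) := ldiv f wid.
Definition wo (f : ob -> ob) := ldiv wtop f.

Inductive term : Type :=
| Var (x : nat) | Comp (t u : term) | TO (t : term) | TL (t : term)
| TR (t : term) | Tid | Tbot.

Fixpoint eval (th : nat -> ob -> ob) (t : term) : ob -> ob :=
  match t with
  | Var x => th x
  | Comp t u => wcomp (eval th t) (eval th u)
  | TO t => wo (eval th t)
  | TL t => wl (eval th t)
  | TR t => wr (eval th t)
  | Tid => wid
  | Tbot => wbot
  end.

Inductive sample : Type :=
| Kv (k : nat)
| App (t : term) (a : sample)
| Sc (a : sample)
| Pr (a : sample)
| Last (t : term).

Inductive step : sample -> sample -> Prop :=
| st_app t a : step (App t a) a
| st_sc a : step (Sc a) a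
| st_pr a : step (Pr a) a
| st_comp t u a : step (App (Comp t u) a) (App t (App u a))
| st_o t a : step (App (TO t) a) (App t a)
| st_r1 t a : step (App (TR t) a) (App t (App (TR t) a))
| st_r2 t a : step (App (TR t) a) (App t (Sc (App (TR t) a)))
| st_l1 t a : step (App (TL t) a) (App t (App (TL t) a))
| st_l2 t a : step (App (TL t) a) (App t (Pr (App (TL t) a)))
| st_last t a : step (App t a) (App t (Last t)).

Definition saturation (S : sample -> Prop) : sample -> Prop :=
  fun s => exists b, S b /\ clos_refl_trans sample step b s.

Section Diagram.
Variables (D : sample -> Prop) (d : sample -> ob).

Definition S1 := forall t a b, D (App t a) -> D (App t b) -> D a -> D b ->
  oble (d a) (d b) -> oble (d (App t a)) (d (App t b)).
Definition S2 := forall t a, D (App t a) -> D a ->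
  d a = Fin 0 -> d (App t a) = Fin 0.
Definition S3 := forall a, D (Pr a) -> D a -> d (Pr a) = ominus1 (d a).
Definition S4 := forall a, D (Sc a) -> D a -> d (Sc a) = oplus1 (d a).
Definition S5 := forall t a, D (App t a) -> D a -> D (Last t) ->
  D (App t (Last t)) ->
  (oble (d (Last t)) (d a) <-> d (App t a) = d (App t (Last t))).
Definition S6 := forall t, D (Last t) -> D (App t (Last t)) ->
  d (Last t) = Om -> d (App t (Last t)) = Om.

Definition L1 := forall a, D (App Tid a) -> D a -> d (App Tid a) = d a.
Definition L2 := forall a, D (App Tbot a) -> D (Last Tbot) ->
  d (Last Tbot) = Fin 0.
Definition L3 := forall t u a, D (App (Comp t u) a) -> D (App t (App u a)) ->
  d (App (Comp t u) a) = d (App t (App u a)).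
Definition L4 := forall t u, D (App (Comp t u) (Last (Comp t u))) ->
  D (Last (Comp t u)) -> D (Last t) -> D (Last u) ->
  d (Last (Comp t u)) = Om -> d (Last t) = Om /\ d (Last u) = Om.

Definition O1 := forall t a, D (App (TO t) a) ->
  d (App (TO t) a) = Fin 0 \/ d (App (TO t) a) = Om.
Definition O2 := forall t a, D (App (TO t) a) -> D (App t a) -> D a ->
  oblt (d a) Om -> (d (App (TO t) a) = Om <-> d (App t a) = Om).
Definition O3 := forall t, D (Last (TO t)) -> oblt (d (Last (TO t))) Om.
Definition O4 := forall t a, D (App t a) -> D (App (TO t) (Last (TO t))) ->
  D a -> oblt (d (App (TO t) (Last (TO t)))) Om -> oblt (d a) Om ->
  oblt (d (App t a)) Om.

Definition R1 := forall t a, D (App t (App (TR t) a)) -> D a ->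
  oble (d (App t (App (TR t) a))) (d a).
Definition R2 := forall t a, D (App (TR t) a) -> D a ->
  D (App t (Sc (App (TR t) a))) ->
  oblt (Fin 0) (d a) -> oblt (d a) Om -> oblt (d (App (TR t) a)) Om ->
  oblt (d a) (d (App t (Sc (App (TR t) a)))).
Definition R3 := forall t, D (App (TR t) (Last (TR t))) -> D (Last (TR t)) ->
  D (Last t) -> d (Last (TR t)) = Om -> d (Last t) = Om.
Definition R4 := forall t, D (App (TR t) (Last (TR t))) ->
  D (App t (Sc (App (TR t) (Last (TR t))))) ->
  oblt (d (App (TR t) (Last (TR t)))) Om ->
  d (App t (Sc (App (TR t) (Last (TR t))))) = Om.

Definition La1 := forall t a, D (App t (App (TL t) a)) -> D (App (TL t) a) ->
  D a -> oblt (d (App (TL t) a)) Om -> oble (d a) (d (App t (App (TL t) a))).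
Definition La2 := forall t a, D (App (TL t) a) -> D a ->
  D (App t (Pr (App (TL t) a))) ->
  oblt (Fin 0) (d a) -> oblt (d a) Om -> oblt (d (App (TL t) a)) Om ->
  oblt (d (App t (Pr (App (TL t) a)))) (d a).
Definition La3 := forall t a, D (App t (App (TL t) a)) -> D a ->
  D (App (TL t) a) -> oblt (d a) Om -> d (App (TL t) a) = Om ->
  oblt (d (App t (App (TL t) a))) (d a).
Definition La4 := forall t, D (App (TL t) (Last (TL t))) -> D (Last (TL t)) ->
  D (Last t) -> d (Last (TL t)) = Om -> d (Last t) = Om.
Definition La5 := forall t, D (App (TL t) (Last (TL t))) ->
  D (App t (App (TL t) (Last (TL t)))) ->
  oblt (d (App (TL t) (Last (TL t)))) Om ->
  d (App t (App (TL t) (Last (TL t)))) = Om.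

Definition is_diagram : Prop :=
  S1 /\ S2 /\ S3 /\ S4 /\ S5 /\ S6 /\ L1 /\ L2 /\ L3 /\ L4 /\
  O1 /\ O2 /\ O3 /\ O4 /\ R1 /\ R2 /\ R3 /\ R4 /\
  La1 /\ La2 /\ La3 /\ La4 /\ La5.
End Diagram.

(* Main.v *)
Require Import Defs.
From Stdlib Require Import List Relations ClassicalEpsilon Classical Lia PeanoNat Arith.
Import ListNotations.


Lemma oble_refl a : oble a a. Proof. destruct a; simpl; auto. Qed.
Lemma oble_trans a b c : oble a b -> oble b c -> oble a c.
Proof. destruct a,b,c; simpl; intuition lia. Qed.
Lemma oble_antisym a b : oble a b -> oble b a -> a = b.
Proof. destruct a,b; simpl; intuition; f_equal; lia. Qed.
Lemma oble_total a b : oble a b \/ oble b a.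
Proof. destruct a,b; simpl; auto; lia. Qed.
Lemma oble_Om a : oble a Om. Proof. destruct a; simpl; auto. Qed.
Lemma oble_0 a : oble (Fin 0) a. Proof. destruct a; simpl; auto; lia. Qed.
Lemma Om_le a : oble Om a -> a = Om. Proof. destruct a; simpl; tauto. Qed.
Lemma le_0 a : oble a (Fin 0) -> a = Fin 0.
Proof. destruct a; simpl; intros; [f_equal; lia|tauto]. Qed.
Lemma oblt_nle a b : oblt a b <-> ~ oble b a.
Proof.
  unfold oblt; split.
  - intros [H1 H2] H3. apply H2, oble_antisym; auto.
  - intros H. destruct (oble_total a b); [|tauto]. split; auto.
    intros ->. apply H, oble_refl.
Qed.
Lemma nle_lt a b : ~ oble a b -> oble b a.
Proof. intros H. destruct (oble_total a b); tauto. Qed.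
Lemma all_fin_Om x : (forall n, oble (Fin n) x) -> x = Om.
Proof. destruct x; auto. intros H. specialize (H (S n)); simpl in H; lia. Qed.
Lemma ob_eq_le a b : (forall v, oble v a <-> oble v b) -> a = b.
Proof.
  intros H. apply oble_antisym; [apply H|apply H]; apply oble_refl.
Qed.
Lemma nle_S a j : ~ oble a (Fin j) -> oble (Fin (S j)) a.
Proof. destruct a; simpl; auto; lia. Qed.

Lemma nS_le c x : ~ oble (Fin (S c)) x -> oble x (Fin c).
Proof. destruct x; simpl; intros; [lia|tauto]. Qed.

(** * warps *)
Section W.
Variable f : ob -> ob.
Hypothesis Hf : is_warp f.
Lemma wmono a b : oble a b -> oble (f a) (f b). Proof. apply Hf. Qed.
Lemma w0 : f (Fin 0) = Fin 0. Proof. apply Hf. Qed.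
Lemma wtopub a : oble (f a) (f Om). Proof. apply wmono, oble_Om. Qed.
Lemma wsup b : (forall n, oble (f (Fin n)) b) -> oble (f Om) b. Proof. apply Hf. Qed.
Lemma wreach c : oble (Fin c) (f Om) -> exists n, oble (Fin c) (f (Fin n)).
Proof.
  intros H. destruct c. { exists 0. apply oble_0. }
  apply NNPP; intros N.
  assert (oble (f Om) (Fin c)).
  { apply wsup. intros n. apply nS_le. intro. apply N; eauto. }
  apply (oble_trans _ _ _ H) in H0. simpl in H0; lia.
Qed.
Lemma wfintop m : f Om = Fin m -> exists n, f (Fin n) = Fin m.
Proof.
  intros H. destruct (wreach m) as [n Hn]. rewrite H; apply oble_refl.
  exists n. apply oble_antisym; auto. rewrite <- H. apply wtopub.
Qed.
End W.

Definition is_sup (P : ob -> Prop) s :=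
  (forall a, P a -> oble a s) /\ (forall b, (forall a, P a -> oble a b) -> oble s b).

Lemma sup_ex P : exists s, is_sup P s.
Proof.
  destruct (classic (exists n, forall a, P a -> oble a (Fin n))) as [[n Hn]|N].
  - induction n.
    + exists (Fin 0). split; auto. intros; apply oble_0.
    + destruct (classic (forall a, P a -> oble a (Fin n))) as [H|H]; auto.
      exists (Fin (S n)). split; auto. intros b Hb.
      destruct b as [j|]; [|exact I]. simpl. destruct (Compare_dec.le_lt_dec (S n) j); auto.
      exfalso. apply H. intros a Ha. apply (oble_trans _ _ _ (Hb a Ha)). simpl; lia.
  - exists Om. split. intros; apply oble_Om.
    intros b Hb. destruct b as [j|]; [|exact I]. exfalso; eauto.
Qed.

Lemma warp_comp f g : is_warp f -> is_warp g -> is_warp (wcomp f g).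
Proof.
  intros Hf Hg. unfold wcomp. split; [|split; [|split]].
  - intros a b H. apply (wmono f Hf), (wmono g Hg), H.
  - rewrite (w0 g Hg). apply (w0 f Hf).
  - intros n. apply (wmono f Hf), (wtopub g Hg).
  - intros b Hb. destruct (g Om) eqn:E.
    + destruct (wfintop g Hg n E) as [m Hm]. rewrite <- Hm. apply Hb.
    + apply (wsup f Hf). intros n.
      destruct (wreach g Hg n) as [m Hm]. rewrite E; exact I.
      apply (oble_trans _ _ _ (wmono f Hf _ _ Hm)). apply Hb.
Qed.

Lemma warp_id : is_warp wid.
Proof. unfold wid; split; [|split; [|split]]; auto. intros; exact I.
  intros b Hb. apply all_fin_Om in Hb. subst; exact I. Qed.
Lemma warp_bot : is_warp wbot.
Proof. unfold wbot; split; [|split; [|split]]; intros; auto; try apply oble_refl; apply oble_0. Qed.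
Lemma warp_top : is_warp wtop.
Proof.
  unfold wtop; split; [|split; [|split]]; auto.
  - intros [[|a]|] [[|b]|]; simpl; intros; auto; lia.
  - intros [|n]; simpl; auto.
  - intros b Hb. specialize (Hb 1). exact Hb.
Qed.

Lemma warp_sup_le f Q s c : is_warp f -> is_sup Q s ->
  (forall a, Q a -> oble (f a) c) -> oble (f s) c.
Proof.
  intros Hf [H1 H2] H.
  destruct s as [[|m]|].
  - rewrite (w0 f Hf). apply oble_0.
  - destruct (classic (exists a, Q a /\ ~ oble a (Fin m))) as [[a [Ha Hn]]|N].
    + assert (a = Fin (S m)). { apply oble_antisym; auto. apply nle_S; auto. }
      subst; auto.
    + assert (oble (Fin (S m)) (Fin m)). { apply H2. intros a Ha.
        apply NNPP; intro; apply N; eauto. }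
      simpl in H0; lia.
  - apply (wsup f Hf). intros n.
    destruct (classic (exists a, Q a /\ ~ oble a (Fin n))) as [[a [Ha Hn]]|N].
    + apply (oble_trans _ (f a)); auto. apply (wmono f Hf). apply nle_lt; auto.
    + assert (oble Om (Fin n)). { apply H2. intros a Ha.
        apply NNPP; intro; apply N; eauto. }
      destruct H0.
Qed.

(** residual existence *)
Definition Rspec (C : (ob -> ob) -> Prop) x :=
  is_warp x /\ forall y, is_warp y -> (wle y x <-> C y).

Lemma sup_warp (C : (ob -> ob) -> Prop) :
  exists x, is_warp x /\ (forall y, is_warp y -> C y -> wle y x) /\
     forall p, is_sup (fun a => exists y, is_warp y /\ C y /\ a = y p) (x p).
Proof.
  set (S := fun p a => exists y, is_warp y /\ C y /\ a = y p).
  exists (fun p => proj1_sig (constructive_indefinite_description _ (sup_ex (S p)))).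
  set (X := fun p => proj1_sig (constructive_indefinite_description _ (sup_ex (S p)))).
  assert (HX : forall p, is_sup (S p) (X p)).
  { intros p. unfold X. destruct (constructive_indefinite_description _ _); auto. }
  fold X. split; [|split; auto].
  - split; [|split; [|split]].
    + intros a b Hab. apply (proj2 (HX a)). intros v [y [Hy [Cy ->]]].
      apply (oble_trans _ (y b)). apply (wmono y Hy _ _ Hab). apply (proj1 (HX b)).
      exists y; auto.
    + apply le_0. apply (proj2 (HX _)). intros v [y [Hy [Cy ->]]].
      rewrite (w0 y Hy). apply oble_refl.
    + intros n. apply (proj2 (HX _)). intros v [y [Hy [Cy ->]]].
      apply (oble_trans _ (y Om)). apply (wtopub y Hy). apply (proj1 (HX Om)).
      exists y; auto.
    + intros b Hb. apply (proj2 (HX _)). intros v [y [Hy [Cy ->]]].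
      apply (wsup y Hy). intros n. apply (oble_trans _ (X (Fin n))); auto.
      apply (proj1 (HX _)). exists y; auto.
  - intros y Hy Cy p. apply (proj1 (HX p)). exists y; auto.
Qed.

Lemma ldiv_ex f h : is_warp f ->
  exists x, is_warp x /\ forall y, is_warp y -> (wle y x <-> wle (wcomp f y) h).
Proof.
  intros Hf. destruct (sup_warp (fun y => wle (wcomp f y) h)) as [X [HX [H1 H2]]].
  exists X. split; auto. intros y Hy. split; auto.
  intros Hle p. unfold wcomp. apply (oble_trans _ (f (X p))).
  apply (wmono f Hf), Hle.
  apply (warp_sup_le f _ _ _ Hf (H2 p)). intros a [z [Hz [Cz ->]]]. apply Cz.
Qed.

Lemma rdiv_ex h g :
  exists x, is_warp x /\ forall y, is_warp y -> (wle y x <-> wle (wcomp y g) h).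
Proof.
  destruct (sup_warp (fun y => wle (wcomp y g) h)) as [X [HX [H1 H2]]].
  exists X. split; auto. intros y Hy. split; auto.
  intros Hle p. unfold wcomp. apply (oble_trans _ (X (g p))). apply Hle.
  apply (proj2 (H2 _)). intros a [z [Hz [Cz ->]]]. apply Cz.
Qed.

Lemma ldiv_spec f h : is_warp f -> is_warp (ldiv f h) /\
  forall y, is_warp y -> (wle y (ldiv f h) <-> wle (wcomp f y) h).
Proof.
  intros Hf. unfold ldiv. apply epsilon_spec. apply ldiv_ex; auto.
Qed.
Lemma rdiv_spec h g : is_warp (rdiv h g) /\
  forall y, is_warp y -> (wle y (rdiv h g) <-> wle (wcomp y g) h).
Proof.
  unfold rdiv. apply epsilon_spec. apply rdiv_ex.
Qed.

Definition stp (q : nat) (v : ob) (r : ob) : ob :=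
  match r with Om => v | Fin m => if Nat.leb q m then v else Fin 0 end.

Lemma warp_stp q v : 1 <= q -> is_warp (stp q v).
Proof.
  intros Hq. split; [|split; [|split]].
  - intros [a|] [b|]; simpl; intros H; try tauto.
    + destruct (Nat.leb q a) eqn:E1, (Nat.leb q b) eqn:E2; try apply oble_refl;
        try apply oble_0. apply Nat.leb_le in E1; apply Nat.leb_nle in E2; lia.
    + destruct (Nat.leb q a); [apply oble_refl|apply oble_0].
    + apply oble_refl.
  - simpl. destruct q; [lia|reflexivity].
  - intros n; simpl. destruct (Nat.leb q n); [apply oble_refl|apply oble_0].
  - intros b Hb. specialize (Hb q). simpl in Hb. rewrite Nat.leb_refl in Hb. exact Hb.
Qed.

Lemma stp_le x q v : is_warp x -> 1 <= q -> (wle (stp q v) x <-> oble v (x (Fin q))).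
Proof.
  intros Hx Hq. split.
  - intros H. specialize (H (Fin q)). simpl in H. rewrite Nat.leb_refl in H. exact H.
  - intros H [m|]; simpl.
    + destruct (Nat.leb q m) eqn:E; [|apply oble_0].
      apply (oble_trans _ _ _ H). apply (wmono x Hx). simpl. apply Nat.leb_le; auto.
    + apply (oble_trans _ _ _ H). apply (wtopub x Hx).
Qed.

Lemma stp_val q v r : oble (Fin q) r -> stp q v r = v.
Proof. destruct r; simpl; auto. intros H. apply Nat.leb_le in H. rewrite H; auto. Qed.
Lemma stp_val0 q v r : ~ oble (Fin q) r -> stp q v r = Fin 0.
Proof. destruct r; simpl; [|tauto]. intros H. destruct (Nat.leb q n) eqn:E; auto.
  apply Nat.leb_le in E; tauto. Qed.

Lemma wr_warp f : is_warp f -> is_warp (wr f).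
Proof. intros Hf. apply (ldiv_spec f wid Hf). Qed.
Lemma wl_warp f : is_warp (wl f).
Proof. apply (rdiv_spec wid f). Qed.
Lemma wo_warp f : is_warp f -> is_warp (wo f).
Proof. intros Hf. apply (ldiv_spec wtop f warp_top). Qed.

Lemma wr_char f p v : is_warp f ->
  (oble v (wr f (Fin (S p))) <-> oble (f v) (Fin (S p))).
Proof.
  intros Hf. rewrite <- (stp_le (wr f) (S p) v (wr_warp f Hf)) by lia.
  rewrite (proj2 (ldiv_spec f wid Hf)) by (apply warp_stp; lia).
  unfold wcomp, wid. split.
  - intros H. specialize (H (Fin (S p))). cbv beta in H. rewrite stp_val in H; auto. apply oble_refl.
  - intros H r. destruct (classic (oble (Fin (S p)) r)).
    + rewrite stp_val; auto. eapply oble_trans; eauto.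
    + rewrite stp_val0; auto. rewrite (w0 f Hf). apply oble_0.
Qed.

Lemma wl_char f p v :
  (oble v (wl f (Fin (S p))) <-> forall r, oble (Fin (S p)) (f r) -> oble v r).
Proof.
  rewrite <- (stp_le (wl f) (S p) v (wl_warp f)) by lia.
  unfold wl. rewrite (proj2 (rdiv_spec wid f)) by (apply warp_stp; lia).
  unfold wcomp, wid. split.
  - intros H r Hr. specialize (H r). cbv beta in H. rewrite stp_val in H; auto.
  - intros H r. destruct (classic (oble (Fin (S p)) (f r))).
    + rewrite stp_val; auto.
    + rewrite stp_val0; auto. apply oble_0.
Qed.

Lemma wo_char f p v : is_warp f ->
  (oble v (wo f (Fin (S p))) <-> v = Fin 0 \/ f (Fin (S p)) = Om).
Proof.
  intros Hf. rewrite <- (stp_le (wo f) (S p) v (wo_warp f Hf)) by lia.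
  unfold wo. rewrite (proj2 (ldiv_spec wtop f warp_top)) by (apply warp_stp; lia).
  unfold wcomp. split.
  - intros H. destruct v as [[|n]|]; auto; right; specialize (H (Fin (S p))); cbv beta in H;
      rewrite stp_val in H; try apply oble_refl; simpl in H; apply Om_le; auto.
  - intros [->|H] r.
    + destruct (classic (oble (Fin (S p)) r)).
      * rewrite stp_val; auto. simpl. apply oble_0.
      * rewrite stp_val0; auto. simpl. apply oble_0.
    + destruct (classic (oble (Fin (S p)) r)).
      * rewrite stp_val; auto. apply (oble_trans _ Om). apply oble_Om.
        rewrite <- H. apply (wmono f Hf); auto.
      * rewrite stp_val0; auto. simpl. apply oble_0.
Qed.

Lemma wo_fin_Om f n : is_warp f -> f (Fin n) = Om -> wo f (Fin n) = Om.
Proof.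
  intros Hf H. destruct n. { rewrite (w0 f Hf) in H; discriminate. }
  apply Om_le. apply wo_char; auto.
Qed.
Lemma wo_fin_0 f n : is_warp f -> f (Fin n) <> Om -> wo f (Fin n) = Fin 0.
Proof.
  intros Hf H. destruct n. { apply (w0 _ (wo_warp f Hf)). }
  destruct (proj1 (wo_char f n (wo f (Fin (S n))) Hf) (oble_refl _)); tauto.
Qed.
Lemma wo_01 f a : is_warp f -> wo f a = Fin 0 \/ wo f a = Om.
Proof.
  intros Hf. destruct a as [n|].
  - destruct (classic (f (Fin n) = Om)); [right; apply wo_fin_Om|left; apply wo_fin_0]; auto.
  - destruct (classic (exists n, wo f (Fin n) = Om)) as [[n Hn]|N].
    + right. apply Om_le. pose proof (wtopub _ (wo_warp f Hf) (Fin n)) as W.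
      rewrite Hn in W. exact W.
    + left. apply le_0. apply (wsup _ (wo_warp f Hf)). intros n.
      destruct (classic (f (Fin n) = Om)).
      * exfalso; apply N; exists n; apply wo_fin_Om; auto.
      * rewrite wo_fin_0; auto. apply oble_refl.
Qed.

Lemma warp_eval th t : (forall x, is_warp (th x)) -> is_warp (eval th t).
Proof.
  intros Hth. induction t; simpl; auto using warp_comp, wo_warp, wr_warp, wl_warp,
    warp_id, warp_bot.
Qed.

Lemma wl_top f Q : is_warp f -> wl f Om = Fin Q -> f (Fin Q) = Om.
Proof.
  intros Hf H. apply all_fin_Om. intros n.
  apply (oble_trans _ (Fin (S n))). simpl; lia.
  assert (Hle : oble (wl f (Fin (S n))) (Fin Q)).
  { rewrite <- H. apply (wtopub _ (wl_warp f)). }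
  assert (~ oble (Fin (S Q)) (wl f (Fin (S n)))).
  { intro C. pose proof (oble_trans _ _ _ C Hle). simpl in H0; lia. }
  rewrite wl_char in H0. apply NNPP. intro C. apply H0. intros r Hr.
  apply NNPP. intro C2. apply C. apply nS_le in C2.
  apply (oble_trans _ _ _ Hr). apply (wmono f Hf); auto.
Qed.

Definition LP (f : ob -> ob) q := f q = f Om /\ forall r, f r = f Om -> oble q r.

Lemma nat_least (P : nat -> Prop) : (exists n, P n) -> exists n, P n /\ forall m, P m -> n <= m.
Proof.
  intros [n Hn]. induction n as [n IH] using lt_wf_ind.
  destruct (classic (exists m, m < n /\ P m)) as [[m [Hm Pm]]|N].
  - apply (IH m Hm Pm).
  - exists n. split; auto. intros m Pm. destruct (Nat.lt_ge_cases m n); auto.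
    exfalso; eauto.
Qed.

Lemma last_ex f : exists q, LP f q.
Proof.
  destruct (classic (exists n, f (Fin n) = f Om)) as [H|N].
  - destruct (nat_least _ H) as [n [Hn Hl]]. exists (Fin n). split; auto.
    intros [m|] Hm; simpl; auto.
  - exists Om. split; auto. intros [m|] Hm; simpl; auto. apply N; eauto.
Qed.

Definition lastv f := proj1_sig (constructive_indefinite_description _ (last_ex f)).
Lemma lastv_LP f : LP f (lastv f).
Proof. unfold lastv. destruct (constructive_indefinite_description _ _); auto. Qed.

Section LPL.
Variable f : ob -> ob.
Hypothesis Hf : is_warp f.

Lemma LP_S5 q a : LP f q -> (oble q a <-> f a = f q).
Proof.
  intros [H1 H2]. split.
  - intros H. apply oble_antisym. rewrite H1. apply (wtopub f Hf).
    apply (wmono f Hf); auto.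
  - intros H. apply H2. congruence.
Qed.

Lemma LP_S6 q : LP f q -> q = Om -> f q = Om.
Proof.
  intros [H1 H2] ->. destruct (f Om) eqn:E; auto.
  destruct (wfintop f Hf n E) as [m Hm]. destruct (H2 (Fin m) Hm).
Qed.

Lemma LP_Om_nfin q n : LP f q -> q = Om -> f (Fin n) <> f Om.
Proof. intros [H1 H2] -> E. apply H2 in E. destruct E. Qed.

Lemma LP_fin q : LP f q -> oblt q Om -> exists n, q = Fin n.
Proof. intros _ H. destruct q; eauto. destruct H; tauto. Qed.

Lemma LP_O3 q : LP (wo f) q -> oblt q Om.
Proof.
  intros HL. apply oblt_nle. intros C. apply Om_le in C. subst.
  assert (Hw := wo_warp f Hf).
  destruct (wo_01 f Om Hf) as [E|E].
  - destruct HL as [_ HL]. specialize (HL (Fin 0)). simpl in HL. apply HL.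
    rewrite E. apply (w0 _ Hw).
  - destruct (classic (exists n, wo f (Fin n) = Om)) as [[n Hn]|N].
    + destruct HL as [_ HL]. apply (HL (Fin n)). congruence.
    + assert (oble (wo f Om) (Fin 0)).
      { apply (wsup _ Hw). intros n. destruct (wo_01 f (Fin n) Hf) as [E2|E2].
        rewrite E2; apply oble_refl. exfalso; eauto. }
      rewrite E in H; destruct H.
Qed.
End LPL.

Section LPL2.
Variable f : ob -> ob.
Hypothesis Hf : is_warp f.

Lemma LP_bot q : LP wbot q -> q = Fin 0.
Proof. intros [_ H]. apply le_0. apply H. reflexivity. Qed.

Lemma LP_L4 g q qf qg : is_warp g -> LP (wcomp f g) q -> LP f qf -> LP g qg ->
  q = Om -> qf = Om /\ qg = Om.
Proof.
  intros Hg Hq Hqf Hqg E. assert (Hfg := warp_comp f g Hf Hg).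
  assert (T := LP_S6 _ Hfg q Hq E). destruct Hq as [Hq1 Hq2]. subst q.
  assert (NG : qg = Om).
  { destruct qg as [n|]; auto. exfalso. destruct Hqg as [G1 _].
    specialize (Hq2 (Fin n)). simpl in Hq2. apply Hq2. unfold wcomp. rewrite G1. auto. }
  split; auto. subst qg.
  assert (GO := LP_S6 g Hg Om Hqg eq_refl).
  destruct qf as [n|]; auto. exfalso. destruct Hqf as [F1 _].
  assert (FO : f Om = Om). { unfold wcomp in T. rewrite GO in T. auto. }
  destruct (wreach g Hg n) as [m Hm]. rewrite GO; exact I.
  specialize (Hq2 (Fin m)). simpl in Hq2. apply Hq2. unfold wcomp.
  rewrite T in Hq1. unfold wcomp in T. rewrite T.
  apply Om_le. rewrite <- FO, <- F1. apply (wmono f Hf); auto.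
Qed.

Lemma LP_O4 q a : LP (wo f) q -> oblt (wo f q) Om -> oblt a Om -> oblt (f a) Om.
Proof.
  intros [H1 _] H2 H3. rewrite H1 in H2.
  destruct (wo_01 f Om Hf) as [E|E]; [|rewrite E in H2; destruct H2; tauto].
  destruct a as [n|]; [|destruct H3; tauto].
  apply oblt_nle. intros C. apply Om_le in C.
  assert (wo f (Fin n) = Om) by (apply wo_fin_Om; auto).
  pose proof (wtopub _ (wo_warp f Hf) (Fin n)). rewrite H, E in H0. destruct H0.
Qed.

Lemma O2_sem a : oblt a Om -> (wo f a = Om <-> f a = Om).
Proof.
  intros H. destruct a as [n|]; [|destruct H; tauto]. split.
  - intros E. apply NNPP. intros C. rewrite wo_fin_0 in E; auto. discriminate.
  - intros E. apply wo_fin_Om; auto.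
Qed.

Lemma R1_sem a : oble (f (wr f a)) a.
Proof.
  destruct a as [[|p]|].
  - rewrite (w0 _ (wr_warp f Hf)), (w0 f Hf). apply oble_refl.
  - apply wr_char; auto. apply oble_refl.
  - apply oble_Om.
Qed.

Lemma R2_sem a : oblt (Fin 0) a -> oblt a Om -> oblt (wr f a) Om ->
  oblt a (f (oplus1 (wr f a))).
Proof.
  intros H0 H1 H2. destruct a as [[|p]|]; [destruct H0; tauto| |destruct H1; tauto].
  destruct (wr f (Fin (S p))) as [q|] eqn:E; [|destruct H2; tauto].
  simpl. apply oblt_nle. intros C. apply wr_char in C; auto. rewrite E in C. simpl in C; lia.
Qed.

Lemma R3_sem qg qf : LP (wr f) qg -> LP f qf -> qg = Om -> qf = Om.
Proof.
  intros Hg Hqf E. assert (Hw := wr_warp f Hf).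
  assert (GO := LP_S6 _ Hw qg Hg E).
  assert (NF : forall n, wr f (Fin n) <> Om).
  { intros n C. subst qg. apply (LP_Om_nfin _ Om n Hg eq_refl). congruence. }
  destruct qf as [m|]; auto. exfalso. destruct Hqf as [F1 _].
  subst qg. destruct (f Om) as [c|] eqn:FO.
  - apply (NF (S c)). apply Om_le. apply wr_char; auto. rewrite FO. simpl; lia.
  - assert (oble (wr f Om) (Fin m)).
    { apply (wsup _ Hw). intros [|n]. rewrite (w0 _ Hw). apply oble_0.
      apply NNPP. intros C. apply nle_lt in C.
      assert (C2 : oble (Fin m) (wr f (Fin (S n)))) by exact C.
      apply wr_char in C2; auto. rewrite F1 in C2. destruct C2. }
    rewrite GO in H. destruct H.
Qed.

Lemma R4_sem q : LP (wr f) q -> oblt (wr f q) Om -> f (oplus1 (wr f q)) = Om.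
Proof.
  intros [H1 _] H2. rewrite H1 in *. assert (Hw := wr_warp f Hf).
  destruct (wr f Om) as [Q|] eqn:E; [|destruct H2; tauto]. simpl.
  destruct (f (Fin (S Q))) as [c|] eqn:Fc; auto. exfalso.
  assert (oble (Fin (S Q)) (wr f (Fin (S c)))). { apply wr_char; auto. rewrite Fc; simpl; lia. }
  pose proof (wtopub _ Hw (Fin (S c))). rewrite E in H0.
  pose proof (oble_trans _ _ _ H H0). simpl in H3; lia.
Qed.

Lemma La1_sem a : oblt (wl f a) Om -> oble a (f (wl f a)).
Proof.
  intros H. assert (Hw := wl_warp f).
  destruct a as [[|p]|].
  - apply oble_0.
  - destruct (wl f (Fin (S p))) as [q|] eqn:E; [|destruct H; tauto].
    assert (~ oble (Fin (S q)) (wl f (Fin (S p)))). { rewrite E; simpl; lia. }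
    rewrite wl_char in H0. apply NNPP; intro C. apply H0. intros r Hr.
    apply NNPP; intro C2. apply nS_le in C2. apply C.
    apply (oble_trans _ _ _ Hr). apply (wmono f Hf); auto.
  - destruct (wl f Om) as [Q|] eqn:E; [|destruct H; tauto].
    rewrite (wl_top f Q Hf E). apply oble_refl.
Qed.

Lemma La2_sem a : oblt (Fin 0) a -> oblt a Om -> oblt (wl f a) Om ->
  oblt (f (ominus1 (wl f a))) a.
Proof.
  intros H0 H1 H2. destruct a as [[|p]|]; [destruct H0; tauto| |destruct H1; tauto].
  destruct (wl f (Fin (S p))) as [[|q]|] eqn:E; [| |destruct H2; tauto]; simpl.
  - rewrite (w0 f Hf). apply oblt_nle. simpl; lia.
  - apply oblt_nle. intros C.
    assert (oble (Fin (S q)) (wl f (Fin (S p)))) by (rewrite E; apply oble_refl).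
    rewrite wl_char in H. apply H in C. simpl in C; lia.
Qed.

Lemma La3_sem a : oblt a Om -> wl f a = Om -> oblt (f (wl f a)) a.
Proof.
  intros H1 H2. rewrite H2. destruct a as [[|p]|]; [| |destruct H1; tauto].
  - rewrite (w0 _ (wl_warp f)) in H2. discriminate.
  - apply oblt_nle. intros C. destruct (wreach f Hf (S p) C) as [n Hn].
    assert (oble Om (wl f (Fin (S p)))) by (rewrite H2; apply oble_refl).
    rewrite wl_char in H. apply H in Hn. destruct Hn.
Qed.

Lemma La4_sem qg qf : LP (wl f) qg -> LP f qf -> qg = Om -> qf = Om.
Proof.
  intros Hg Hqf E. assert (Hw := wl_warp f).
  assert (GO := LP_S6 _ Hw qg Hg E).
  assert (NF : forall n, wl f (Fin n) <> Om).
  { intros n C. subst qg. apply (LP_Om_nfin _ Om n Hg eq_refl). congruence. }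
  destruct qf as [m|]; auto. exfalso. destruct Hqf as [F1 _].
  subst qg. destruct (f Om) as [c|] eqn:FO.
  - apply (NF (S c)). apply Om_le. apply wl_char. intros r Hr.
    pose proof (wtopub f Hf r). rewrite FO in H.
    pose proof (oble_trans _ _ _ Hr H). simpl in H0; lia.
  - assert (oble (wl f Om) (Fin m)).
    { apply (wsup _ Hw). intros [|n]. rewrite (w0 _ Hw). apply oble_0.
      assert (C := oble_refl (wl f (Fin (S n)))). rewrite wl_char in C.
      apply C. rewrite F1. apply oble_Om. }
    rewrite GO in H. destruct H.
Qed.

Lemma La5_sem q : LP (wl f) q -> oblt (wl f q) Om -> f (wl f q) = Om.
Proof.
  intros [H1 _] H2. rewrite H1 in *.
  destruct (wl f Om) as [Q|] eqn:E; [|destruct H2; tauto].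
  apply wl_top; auto.
Qed.
End LPL2.

Section Fwd.
Variable th : nat -> ob -> ob.
Hypothesis Hth : forall x, is_warp (th x).
Variable p : ob.

Fixpoint dl (s : sample) : ob :=
  match s with
  | Kv _ => p
  | App t a => eval th t (dl a)
  | Sc a => oplus1 (dl a)
  | Pr a => ominus1 (dl a)
  | Last t => lastv (eval th t)
  end.

Let W t := warp_eval th t Hth.
Let LPt t : LP (eval th t) (dl (Last t)) := lastv_LP (eval th t).

Variable D : sample -> Prop.
Lemma f1 : S1 D dl. Proof. intros t a b _ _ _ _ H; simpl. apply (wmono _ (W t)); auto. Qed.
Lemma f2 : S2 D dl. Proof. intros t a _ _ H; simpl. rewrite H. apply (w0 _ (W t)). Qed.
Lemma f3 : S3 D dl. Proof. intros a _ _; reflexivity. Qed.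
Lemma f4 : S4 D dl. Proof. intros a _ _; reflexivity. Qed.
Lemma f5 : S5 D dl. Proof. intros t a _ _ _ _; simpl. apply (LP_S5 _ (W t) _ _ (LPt t)). Qed.
Lemma f6 : S6 D dl. Proof. intros t _ _ H; simpl. apply (LP_S6 _ (W t) _ (LPt t)); auto. Qed.
Lemma f7 : L1 D dl. Proof. intros a _ _; reflexivity. Qed.
Lemma f8 : L2 D dl. Proof. intros a _ _; simpl. apply LP_bot. apply (LPt Tbot). Qed.
Lemma f9 : L3 D dl. Proof. intros t u a _ _; reflexivity. Qed.
Lemma f10 : L4 D dl. Proof. intros t u _ _ _ _ H; simpl.
  apply (LP_L4 _ (W t) (eval th u) _ _ _ (W u) (LPt (Comp t u)) (LPt t) (LPt u) H). Qed.
Lemma f11 : O1 D dl. Proof. intros t a _; simpl. apply wo_01; auto. Qed.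
Lemma f12 : O2 D dl. Proof. intros t a _ _ _ H; simpl. apply O2_sem; auto. Qed.
Lemma f13 : O3 D dl. Proof. intros t _; simpl. apply (LP_O3 _ (W t) _ (LPt (TO t))). Qed.
Lemma f14 : O4 D dl. Proof. intros t a _ _ _ H1 H2; simpl in *.
  apply (LP_O4 _ (W t) _ _ (LPt (TO t))); auto. Qed.
Lemma f15 : R1 D dl. Proof. intros t a _ _; simpl. apply R1_sem; auto. Qed.
Lemma f16 : R2 D dl. Proof. intros t a _ _ _ H1 H2 H3; simpl in *. apply R2_sem; auto. Qed.
Lemma f17 : R3 D dl. Proof. intros t _ _ _ H; simpl in *.
  apply (R3_sem _ (W t) _ _ (LPt (TR t)) (LPt t)); auto. Qed.
Lemma f18 : R4 D dl. Proof. intros t _ _ H; simpl in *.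
  apply (R4_sem _ (W t) _ (LPt (TR t))); auto. Qed.
Lemma f19 : La1 D dl. Proof. intros t a _ _ _ H; simpl in *. apply La1_sem; auto. Qed.
Lemma f20 : La2 D dl. Proof. intros t a _ _ _ H1 H2 H3; simpl in *. apply La2_sem; auto. Qed.
Lemma f21 : La3 D dl. Proof. intros t a _ _ _ H1 H2; simpl in *. apply La3_sem; auto. Qed.
Lemma f22 : La4 D dl. Proof. intros t _ _ _ H; simpl in *.
  apply (La4_sem _ (W t) _ _ (LPt (TL t)) (LPt t)); auto. Qed.
Lemma f23 : La5 D dl. Proof. intros t _ _ H; simpl in *.
  apply (La5_sem _ (W t) _ (LPt (TL t))); auto. Qed.

Lemma fwd_diagram : is_diagram D dl.
Proof.
  unfold is_diagram.
  repeat match goal with |- _ /\ _ => split end;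
  auto using f1,f2,f3,f4,f5,f6,f7,f8,f9,f10,f11,f12,f13,f14,f15,f16,f17,f18,f19,f20,f21,f22,f23.
Qed.
End Fwd.

Fixpoint lst (t : term) (a : sample) {struct t} : list sample :=
  let c := fun b : sample =>
    match t with
    | Comp t1 u => lst t1 (App u b) ++ lst u b
    | TO t1 => lst t1 b
    | TR t1 => lst t1 (App (TR t1) b) ++ lst t1 (Sc (App (TR t1) b))
    | TL t1 => lst t1 (App (TL t1) b) ++ lst t1 (Pr (App (TL t1) b))
    | _ => []
    end in
  App t a :: a :: App t (Last t) :: Last t :: c a ++ c (Last t).

Lemma App_neq u b : App u b <> b.
Proof. revert u; induction b; intros u H; try discriminate.
  injection H; intros; subst. eapply IHb; eauto. Qed.

Lemma lst_head t a : In (App t a) (lst t a).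
Proof. destruct t; simpl; auto. Qed.
Lemma lst_base t a : In a (lst t a).
Proof. destruct t; simpl; auto. Qed.
Lemma lst_headL t a : In (App t (Last t)) (lst t a).
Proof. destruct t; simpl; auto. Qed.
Lemma lst_L t a : In (Last t) (lst t a).
Proof. destruct t; simpl; auto. Qed.

Definition cpart (t : term) (b : sample) : list sample :=
    match t with
    | Comp t1 u => lst t1 (App u b) ++ lst u b
    | TO t1 => lst t1 b
    | TR t1 => lst t1 (App (TR t1) b) ++ lst t1 (Sc (App (TR t1) b))
    | TL t1 => lst t1 (App (TL t1) b) ++ lst t1 (Pr (App (TL t1) b))
    | _ => []
    end.

Lemma lst_eq t a : lst t a = App t a :: a :: App t (Last t) :: Last t :: cpart t a ++ cpart t (Last t).
Proof. destruct t; reflexivity. Qed.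

Lemma cpart_incl t a b : (b = a \/ b = Last t) -> incl (cpart t b) (lst t a).
Proof. intros Hb x Hx. rewrite lst_eq. simpl. right; right; right; right.
  apply in_app_iff. destruct Hb; subst; auto. Qed.

Lemma head_step t a b s' : (b = a \/ b = Last t) -> step (App t b) s' -> In s' (lst t a).
Proof.
  intros Hb Hs. inversion Hs; subst.
  - destruct Hb; subst. apply lst_base. apply lst_L.
  - apply (cpart_incl (Comp t0 u) a b Hb). simpl. apply in_app_iff; left; apply lst_head.
  - apply (cpart_incl (TO t0) a b Hb). simpl. apply lst_head.
  - apply (cpart_incl (TR t0) a b Hb). simpl. apply in_app_iff; left; apply lst_head.
  - apply (cpart_incl (TR t0) a b Hb). simpl. apply in_app_iff; right; apply lst_head.
  - apply (cpart_incl (TL t0) a b Hb). simpl. apply in_app_iff; left; apply lst_head.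
  - apply (cpart_incl (TL t0) a b Hb). simpl. apply in_app_iff; right; apply lst_head.
  - apply lst_headL.
Qed.

Lemma Last_nostep t s : ~ step (Last t) s.
Proof. intro H; inversion H. Qed.

Lemma base_case t a b s s' : (b = a \/ b = Last t) -> s = b -> step s s' ->
  In s' (lst t a) \/ s = a.
Proof. intros [->| ->] -> Hs; auto. exfalso; eapply Last_nostep; eauto. Qed.

Lemma headb t a b : (b = a \/ b = Last t) -> In (App t b) (lst t a).
Proof. intros [->| ->]. apply lst_head. apply lst_headL. Qed.

Lemma lst_closed t : forall a s s', In s (lst t a) -> step s s' -> In s' (lst t a) \/ s = a.
Proof.
  induction t; intros a s s' Hin Hs; rewrite lst_eq in Hin; simpl in Hin;
  (destruct Hin as [<-|[<-|[<-|[<-|Hin]]]];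
   [left; eapply head_step; [left; reflexivity|exact Hs]
   |right; auto
   |left; eapply head_step; [right; reflexivity|exact Hs]
   |exfalso; eapply Last_nostep; eauto
   |]);
  simpl in Hin; try tauto;
  apply in_app_iff in Hin;
  match goal with |- In s' (lst ?T a) \/ _ =>
  (assert (HB : forall b, b = a \/ b = Last T -> In s (cpart T b) -> In s' (lst T a) \/ s = a);
   [|destruct Hin as [H|H]; [apply (HB a)|apply (HB (Last T))]; auto]) end;
  intros b Hb Hs2; simpl in Hs2.
  - apply in_app_iff in Hs2. destruct Hs2 as [H|H].
    + destruct (IHt1 _ _ _ H Hs) as [H'|H'].
      * left. apply (cpart_incl _ a b Hb). simpl. apply in_app_iff; auto.
      * subst s. destruct (IHt2 b _ _ (lst_head t2 b) Hs) as [H2|H2].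
        -- left. apply (cpart_incl _ a b Hb). simpl. apply in_app_iff; auto.
        -- exfalso; eapply App_neq; eauto.
    + destruct (IHt2 _ _ _ H Hs) as [H'|H'].
      * left. apply (cpart_incl _ a b Hb). simpl. apply in_app_iff; auto.
      * eapply base_case; eauto.
  - destruct (IHt _ _ _ Hs2 Hs) as [H'|H'].
    * left. apply (cpart_incl _ a b Hb). simpl. auto.
    * eapply base_case; eauto.
  - apply in_app_iff in Hs2. destruct Hs2 as [H|H].
    + destruct (IHt _ _ _ H Hs) as [H'|H'].
      * left. apply (cpart_incl _ a b Hb). simpl. apply in_app_iff; auto.
      * subst s. left. eapply head_step; eauto.
    + destruct (IHt _ _ _ H Hs) as [H'|H'].
      * left. apply (cpart_incl _ a b Hb). simpl. apply in_app_iff; auto.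
      * subst s. left. inversion Hs; subst. apply headb; auto.
  - apply in_app_iff in Hs2. destruct Hs2 as [H|H].
    + destruct (IHt _ _ _ H Hs) as [H'|H'].
      * left. apply (cpart_incl _ a b Hb). simpl. apply in_app_iff; auto.
      * subst s. left. eapply head_step; eauto.
    + destruct (IHt _ _ _ H Hs) as [H'|H'].
      * left. apply (cpart_incl _ a b Hb). simpl. apply in_app_iff; auto.
      * subst s. left. inversion Hs; subst. apply headb; auto.
Qed.

Lemma sat_finite (ts : list term) (k : nat) :
  forall s, saturation (fun s => exists t, In t ts /\ s = App t (Kv k)) s ->
  In s (flat_map (fun t => lst t (Kv k)) ts).
Proof.
  intros s [b [[t [Ht ->]] Hr]].
  assert (Hb : In (App t (Kv k)) (flat_map (fun t => lst t (Kv k)) ts)).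
  { apply in_flat_map. exists t; split; auto. apply lst_head. }
  apply clos_rt_rt1n in Hr. induction Hr; auto.
  apply IHHr. apply in_flat_map in Hb. destruct Hb as [t' [Ht' Hin]].
  apply in_flat_map. exists t'. split; auto.
  destruct (lst_closed t' _ _ _ Hin H) as [H1|H1]; auto.
  subst. inversion H.
Qed.

Definition obmax (a b : ob) : ob :=
  match a, b with Fin m, Fin n => Fin (Nat.max m n) | _, _ => Om end.
Lemma obmax_le a b c : oble (obmax a b) c <-> oble a c /\ oble b c.
Proof. destruct a, b, c; simpl; intuition lia. Qed.
Lemma obmax_l a b : oble a (obmax a b).
Proof. destruct a, b; simpl; auto; lia. Qed.
Lemma obmax_r a b : oble b (obmax a b).
Proof. destruct a, b; simpl; auto; lia. Qed.

Section Bwd.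
Variable D : sample -> Prop.
Variable d : sample -> ob.
Hypothesis Dcl : forall s s', D s -> step s s' -> D s'.
Variable M : nat.
Hypothesis Hfin : forall s n, D s -> d s = Fin n -> n <= M.
Hypothesis HS1 : S1 D d.
Hypothesis HS2 : S2 D d.
Hypothesis HS3 : S3 D d.
Hypothesis HS4 : S4 D d.
Hypothesis HS5 : S5 D d.
Hypothesis HS6 : S6 D d.
Hypothesis HL1 : L1 D d.
Hypothesis HL2 : L2 D d.
Hypothesis HL3 : L3 D d.
Hypothesis HL4 : L4 D d.
Hypothesis HO1 : O1 D d.
Hypothesis HO2 : O2 D d.
Hypothesis HO3 : O3 D d.
Hypothesis HO4 : O4 D d.
Hypothesis HR1 : R1 D d.
Hypothesis HR2 : R2 D d.
Hypothesis HR3 : R3 D d.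
Hypothesis HR4 : R4 D d.
Hypothesis HLa1 : La1 D d.
Hypothesis HLa2 : La2 D d.
Hypothesis HLa3 : La3 D d.
Hypothesis HLa4 : La4 D d.
Hypothesis HLa5 : La5 D d.

Lemma Dapp t a : D (App t a) -> D a.
Proof. intros H; eapply Dcl; eauto; constructor. Qed.
Lemma DappL t a : D (App t a) -> D (App t (Last t)).
Proof. intros H; eapply Dcl; eauto; constructor. Qed.
Lemma DL t a : D (App t a) -> D (Last t).
Proof. intros H. apply (Dapp t). eapply DappL; eauto. Qed.

Lemma le_top t a : D (App t a) -> oble (d (App t a)) (d (App t (Last t))).
Proof.
  intros H. destruct (oble_total (d (Last t)) (d a)) as [E|E].
  - rewrite (proj1 (HS5 t a H (Dapp _ _ H) (DL _ _ H) (DappL _ _ H)) E). apply oble_refl.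
  - apply HS1; auto. apply DappL with a; auto. apply (Dapp t); auto. apply (DL t a); auto.
Qed.

Lemma top_eq t a : D (App t a) -> d a = Om -> d (App t a) = d (App t (Last t)).
Proof.
  intros H E. apply (HS5 t a H (Dapp _ _ H) (DL _ _ H) (DappL _ _ H)). rewrite E. apply oble_Om.
Qed.

(** interpolation for variables *)
Definition val x k : ob :=
  match excluded_middle_informative (exists a, D (App (Var x) a) /\ d a = Fin k) with
  | left H => d (App (Var x) (proj1_sig (constructive_indefinite_description _ H)))
  | right _ => Fin 0
  end.

Lemma val_spec x k a : D (App (Var x) a) -> d a = Fin k -> val x k = d (App (Var x) a).
Proof.
  intros H E. unfold val. destruct excluded_middle_informative as [H'|N]; [|exfalso; eauto].
  destruct constructive_indefinite_description as [a' [H1 E1]]. simpl.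
  apply oble_antisym; apply HS1; eauto using Dapp; rewrite E, E1; apply oble_refl.
Qed.
Lemma val_cases x k : val x k = Fin 0 \/ exists a, D (App (Var x) a) /\ d a = Fin k /\ val x k = d (App (Var x) a).
Proof.
  unfold val. destruct excluded_middle_informative as [H'|N]; auto.
  destruct constructive_indefinite_description as [a' [H1 E1]]. simpl. right; eauto.
Qed.

Fixpoint B x p : ob := match p with 0 => val x 0 | S p' => obmax (B x p') (val x (S p')) end.

Lemma B_ge x p k : k <= p -> oble (val x k) (B x p).
Proof.
  induction p; intros H; simpl.
  - replace k with 0 by lia. apply oble_refl.
  - destruct (Nat.eq_dec k (S p)). subst. apply obmax_r.
    apply (oble_trans _ _ _ (IHp ltac:(lia))). apply obmax_l.
Qed.
Lemma B_le x p c : (forall k, k <= p -> oble (val x k) c) -> oble (B x p) c.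
Proof.
  induction p; intros H; simpl. apply H; auto.
  apply obmax_le. split; auto.
Qed.
Lemma B_mono x p q : p <= q -> oble (B x p) (B x q).
Proof. intros H. apply B_le. intros k Hk. apply B_ge. lia. Qed.

Lemma B_val x p a : D (App (Var x) a) -> d a = Fin p -> B x p = d (App (Var x) a).
Proof.
  intros H E. apply oble_antisym.
  - apply B_le. intros k Hk. destruct (val_cases x k) as [->|[a' [H1 [E1 ->]]]].
    apply oble_0. apply HS1; eauto using Dapp; rewrite E, E1; simpl; auto.
  - rewrite <- (val_spec x p a); auto. apply B_ge; auto.
Qed.

Definition interp x (r : ob) : ob :=
  match r with
  | Om => d (App (Var x) (Last (Var x)))
  | Fin p => match d (Last (Var x)) with
             | Om => if Nat.leb p M then B x p else Fin p
             | Fin _ => B x p end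
  end.

Definition occ x := exists a, D (App (Var x) a).

Section Occ.
Variable x : nat.
Hypothesis Hocc : occ x.
Local Notation X := (Var x).
Local Notation T := (d (App (Var x) (Last (Var x)))).

Lemma DX1 : D (App X (Last X)). Proof. destruct Hocc as [a H]. eapply DappL; eauto. Qed.
Lemma DX2 : D (Last X). Proof. destruct Hocc as [a H]. eapply DL; eauto. Qed.

Lemma val_T k : oble (val x k) T.
Proof. destruct (val_cases x k) as [->|[a' [H1 [E1 ->]]]]. apply oble_0. apply le_top; auto. Qed.
Lemma B_T p : oble (B x p) T.
Proof. apply B_le. intros; apply val_T. Qed.

Section LOm.
Hypothesis EL : d (Last X) = Om.
Lemma T_Om : T = Om.
Proof. apply HS6; auto using DX1, DX2. Qed.
Lemma fin_val a n : D (App X a) -> d a = Fin n -> exists m, d (App X a) = Fin m /\ m <= M.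
Proof.
  intros H E. destruct (d (App X a)) as [m|] eqn:E2.
  - exists m; split; auto. eapply Hfin; eauto.
  - exfalso. assert (d (App X a) = d (App X (Last X))).
    { rewrite E2. symmetry. apply T_Om. }
    apply (HS5 X a H (Dapp _ _ H) DX2 DX1) in H0. rewrite EL, E in H0. exact H0.
Qed.
Lemma val_M k : oble (val x k) (Fin M).
Proof.
  destruct (val_cases x k) as [->|[a' [H1 [E1 ->]]]]. apply oble_0.
  destruct (fin_val a' k H1 E1) as [m [-> Hm]]. simpl; auto.
Qed.
Lemma B_M p : oble (B x p) (Fin M).
Proof. apply B_le. intros; apply val_M. Qed.
End LOm.

Lemma interp_le_T r : oble (interp x r) T.
Proof.
  destruct r as [p|]; simpl; [|apply oble_refl].
  destruct (d (Last (Var x))) eqn:EL. apply B_T.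
  rewrite (T_Om EL). apply oble_Om.
Qed.

Lemma interp_warp : is_warp (interp x).
Proof.
  split; [|split; [|split]].
  - intros [a|] [b|] H; simpl in H; try tauto.
    + simpl. destruct (d (Last (Var x))) eqn:EL. apply B_mono; auto.
      destruct (Nat.leb a M) eqn:E1, (Nat.leb b M) eqn:E2.
      * apply B_mono; auto.
      * apply (oble_trans _ _ _ (B_M EL a)). apply Nat.leb_nle in E2. simpl; lia.
      * apply Nat.leb_le in E2; apply Nat.leb_nle in E1; lia.
      * simpl; auto.
    + apply interp_le_T.
    + apply oble_refl.
  - simpl. assert (B x 0 = Fin 0).
    { simpl. destruct (val_cases x 0) as [->|[a' [H1 [E1 ->]]]]; auto. apply HS2; eauto using Dapp. }
    destruct (d (Last (Var x))); auto.
  - intros n. apply interp_le_T.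
  - intros b Hb. simpl.  destruct (d (Last X)) as [l|] eqn:EL.
    + specialize (Hb l). simpl in Hb. rewrite EL in Hb.
      apply (oble_trans _ _ _ (B_ge x l l (le_n l))) in Hb.
      rewrite (val_spec x l (Last X) DX1 EL) in Hb. exact Hb.
    + rewrite (T_Om EL). destruct b as [c|]; [|exact I].
      specialize (Hb (S (Nat.max c M))). unfold interp in Hb. rewrite EL in Hb.
      destruct (Nat.leb (S (Nat.max c M)) M) eqn:E. apply Nat.leb_le in E; lia.
      simpl in Hb; lia.
Qed.

Lemma interp_a a : D (App X a) -> interp x (d a) = d (App X a).
Proof.
  intros H. destruct (d a) as [p|] eqn:E.
  - simpl. destruct (d (Last (Var x))) eqn:EL. apply B_val; auto.
    assert (p <= M) by (eapply Hfin; [apply (Dapp X); eauto|eauto]).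
    apply Nat.leb_le in H0. rewrite H0. apply B_val; auto.
  - simpl. symmetry. apply top_eq; auto.
Qed.

Lemma interp_d n : d (Last X) = Om -> interp x (Fin n) <> Om.
Proof.
  intros EL. simpl. rewrite EL. destruct (Nat.leb n M).
  - intro C. pose proof (B_M EL n). rewrite C in H. exact H.
  - discriminate.
Qed.
End Occ.

Definition thI x := match excluded_middle_informative (occ x) with
  | left _ => interp x | right _ => wid end.

Lemma thI_warp x : is_warp (thI x).
Proof. unfold thI. destruct excluded_middle_informative; auto using interp_warp, warp_id. Qed.


Lemma thI_eval_warp t : is_warp (eval thI t).
Proof. apply warp_eval. apply thI_warp. Qed.

Definition Pa t := forall a, D (App t a) -> eval thI t (d a) = d (App t a).
Definition Pd t := forall a, D (App t a) -> d (Last t) = Om -> forall n, eval thI t (Fin n) <> Om.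

Lemma stp' s s' : D s -> step s s' -> D s'. Proof. apply Dcl. Qed.
Ltac Dc := match goal with
  | H : D ?s |- D ?s' => apply (stp' s s' H); constructor
  end.

Lemma top_Om t a : Pa t -> D (App t a) -> d (Last t) = Om -> eval thI t Om = Om.
Proof.
  intros IH H E. assert (HL := DappL _ _ H).
  transitivity (eval thI t (d (Last t))). rewrite E; reflexivity.
  rewrite (IH _ HL). apply HS6; auto. apply (DL t a H).
Qed.

Lemma case_var x : Pa (Var x) /\ Pd (Var x).
Proof.
  assert (E : forall a, D (App (Var x) a) -> eval thI (Var x) = interp x).
  { intros a H. simpl. unfold thI. destruct excluded_middle_informative as [_|N]; auto.
    exfalso; apply N; exists a; auto. }
  split.
  - intros a H. rewrite (E a H). apply interp_a; try (exists a); auto.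
  - intros a H EL n. rewrite (E a H). apply interp_d; try (exists a); auto.
Qed.

Lemma case_id : Pa Tid /\ Pd Tid.
Proof.
  split.
  - intros a H. simpl. unfold wid. symmetry. apply HL1; auto. eapply Dapp; eauto.
  - intros a H E n. simpl. unfold wid. discriminate.
Qed.

Lemma case_bot : Pa Tbot /\ Pd Tbot.
Proof.
  split.
  - intros a H. simpl. unfold wbot.
    assert (E : d (Last Tbot) = Fin 0) by (apply (HL2 a); auto; eapply DL; eauto).
    rewrite (proj1 (HS5 Tbot a H (Dapp _ _ H) (DL _ _ H) (DappL _ _ H))).
    symmetry. apply HS2; auto. apply (DappL _ _ H). apply (DL _ _ H).
    rewrite E. apply oble_0.
  - intros a H E n. simpl. unfold wbot. discriminate.
Qed.

Lemma case_comp t u : Pa t -> Pd t -> Pa u -> Pd u -> Pa (Comp t u) /\ Pd (Comp t u).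
Proof.
  intros Ht Htd Hu Hud. split.
  - intros a H. assert (H1 : D (App t (App u a))) by Dc.
    assert (H2 : D (App u a)) by Dc.
    simpl. unfold wcomp. rewrite (Hu a H2), (Ht _ H1). symmetry. apply HL3; auto.
  - intros a H EL n. simpl. unfold wcomp.
    assert (H0 : D (App (Comp t u) (Last (Comp t u)))) by Dc.
    assert (H1 : D (App t (App u (Last (Comp t u))))) by Dc.
    assert (H2 : D (App u (Last (Comp t u)))) by Dc.
    destruct (HL4 t u H0 (DL _ _ H0) (DL _ _ H1) (DL _ _ H2) EL) as [E1 E2].
    destruct (eval thI u (Fin n)) as [m|] eqn:E.
    + apply (Htd _ H1 E1).
    + exfalso. apply (Hud _ H2 E2 n E).
Qed.

Lemma case_o t : Pa t -> Pd t -> Pa (TO t) /\ Pd (TO t).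
Proof.
  intros Ht Htd. assert (Hf := thI_eval_warp t).
  assert (FIN : forall a n, D (App (TO t) a) -> d a = Fin n ->
            wo (eval thI t) (Fin n) = d (App (TO t) a)).
  { intros a n H E. assert (H1 : D (App t a)) by Dc.
    assert (Ha := Dapp _ _ H).
    assert (O2' := HO2 t a H H1 Ha). rewrite E in O2'.
    assert (lt : oblt (Fin n) Om) by (split; [exact I|discriminate]).
    specialize (O2' lt). rewrite <- (Ht a H1), E in O2'.
    destruct (classic (eval thI t (Fin n) = Om)) as [C|C].
    - rewrite wo_fin_Om; auto. symmetry. apply O2'; auto.
    - rewrite wo_fin_0; auto. destruct (HO1 t a H) as [X|X]; auto.
      exfalso. apply C, O2', X. }
  split.
  - intros a H. simpl. destruct (d a) as [n|] eqn:E. apply (FIN a); auto.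
    assert (Hl : D (App (TO t) (Last (TO t)))) by Dc.
    assert (Dl : D (Last (TO t))) by (apply (DL _ _ H)).
    rewrite (top_eq _ _ H E).
    destruct (d (Last (TO t))) as [m|] eqn:Em; [|exfalso; destruct (HO3 t Dl) as [_ X]; rewrite Em in X; auto].
    rewrite <- (FIN (Last (TO t)) m Hl Em).
    destruct (wo_01 _ (Fin m) Hf) as [Z|Z].
    + rewrite Z. apply le_0. apply (wsup _ (wo_warp _ Hf)). intros n.
      destruct (classic (eval thI t (Fin n) = Om)) as [C|C].
      2: { rewrite wo_fin_0; auto. apply oble_refl. }
      exfalso.
      assert (H1 : D (App t a)) by Dc.
      assert (TT : eval thI t Om = d (App t (Last t))).
      { rewrite <- E, (Ht a H1). apply top_eq; auto. }
      destruct (d (Last t)) as [lt|] eqn:ELt.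
      * assert (Z' : oblt (d (App (TO t) (Last (TO t)))) Om).
        { rewrite <- (FIN (Last (TO t)) m Hl Em), Z. split; [exact I|discriminate]. }
        assert (O := HO4 t (Last t) (DappL _ _ H1) Hl (DL _ _ H1) Z').
        rewrite ELt in O. assert (LT : oblt (Fin lt) Om) by (split; [exact I|discriminate]).
        specialize (O LT).
        rewrite <- TT in O. destruct O as [_ O]. apply O. apply Om_le.
        pose proof (wtopub _ Hf (Fin n)) as W. rewrite C in W. exact W.
      * apply (Htd a H1 ELt n C).
    + rewrite Z. apply Om_le. pose proof (wtopub _ (wo_warp _ Hf) (Fin m)) as W.
      rewrite Z in W. exact W.
  - intros a H E. exfalso. assert (Dl : D (Last (TO t))) by (apply (DL _ _ H)).
    destruct (HO3 t Dl) as [_ X]. auto.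
Qed.


Lemma case_r t : Pa t -> Pd t -> Pa (TR t) /\ Pd (TR t).
Proof.
  intros Ht Htd. assert (Hf := thI_eval_warp t). assert (Hw := wr_warp _ Hf).
  set (f := eval thI t) in *.
  assert (FIN : forall a n, D (App (TR t) a) -> d a = Fin n ->
            wr f (Fin n) = d (App (TR t) a)).
  { intros a n H E. assert (Ha := Dapp _ _ H).
    assert (H1 : D (App t (App (TR t) a))) by Dc.
    assert (H2 : D (App t (Sc (App (TR t) a)))) by Dc.
    assert (H3 : D (Sc (App (TR t) a))) by (apply (Dapp _ _ H2)).
    destruct n as [|p].
    - rewrite (w0 _ Hw). symmetry. apply (HS2 (TR t) a H Ha E).
    - assert (R1' := HR1 t a H1 Ha). rewrite <- (Ht _ H1) in R1'. fold f in R1'.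
      destruct (d (App (TR t) a)) as [j|] eqn:Eq.
      + apply ob_eq_le. intros v. rewrite wr_char; auto. split.
        * intros Hv. apply NNPP; intro C. apply nle_S in C.
          assert (R2' := HR2 t a H Ha H2). rewrite E, Eq in R2'.
          assert (A1 : oblt (Fin 0) (Fin (S p))) by (apply oblt_nle; simpl; lia).
          assert (A2 : oblt (Fin (S p)) Om) by (split; [exact I|discriminate]).
          assert (A3 : oblt (Fin j) Om) by (split; [exact I|discriminate]).
          specialize (R2' A1 A2 A3). rewrite <- (Ht _ H2) in R2'.
          rewrite (HS4 _ H3 H), Eq in R2'. simpl in R2'. fold f in R2'.
          apply oblt_nle in R2'. apply R2'. apply (oble_trans _ (f v)); auto.
          apply (wmono _ Hf); auto.
        * intros Hv. rewrite E in R1'. apply (oble_trans _ _ _ (wmono _ Hf _ _ Hv)); auto.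
      + apply Om_le. apply wr_char; auto. rewrite <- E; auto. }
  assert (TOPS : forall a, D (App (TR t) a) -> d (Last (TR t)) = Om ->
     d (Last t) = Om /\ (forall n, f (Fin n) <> Om) /\ f Om = Om).
  { intros a H Em. assert (Hl : D (App (TR t) (Last (TR t)))) by Dc.
    assert (Dl : D (Last (TR t))) by (apply (DL _ _ H)).
    assert (H1 : D (App t (App (TR t) a))) by Dc.
    assert (ELt := HR3 t Hl Dl (DL _ _ H1) Em).
    split; auto. split. apply (Htd _ H1 ELt). apply (top_Om t _ Ht H1 ELt). }
  split.
  - intros a H. simpl. fold f. destruct (d a) as [n|] eqn:E. apply (FIN a); auto.
    assert (Hl : D (App (TR t) (Last (TR t)))) by Dc.
    assert (Dl : D (Last (TR t))) by (apply (DL _ _ H)).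
    rewrite (top_eq _ _ H E).
    destruct (d (Last (TR t))) as [m|] eqn:Em.
    + rewrite <- (FIN _ m Hl Em). destruct (wr f (Fin m)) as [j|] eqn:Ej.
      * assert (H4 : D (App t (Sc (App (TR t) (Last (TR t)))))) by Dc.
        assert (H3 : D (Sc (App (TR t) (Last (TR t))))) by (apply (Dapp _ _ H4)).
        assert (R4' := HR4 t Hl H4). rewrite <- (FIN _ m Hl Em), Ej in R4'.
        assert (A3 : oblt (Fin j) Om) by (split; [exact I|discriminate]).
        specialize (R4' A3). rewrite <- (Ht _ H4), (HS4 _ H3 Hl) in R4'.
        rewrite <- (FIN _ m Hl Em), Ej in R4'. simpl in R4'. fold f in R4'.
        apply oble_antisym.
        -- apply (wsup _ Hw). intros [|n']. rewrite (w0 _ Hw). apply oble_0.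
           apply NNPP; intro C. apply nle_S in C. apply wr_char in C; auto.
           rewrite R4' in C. exact C.
        -- rewrite <- Ej. apply (wtopub _ Hw).
      * apply Om_le. pose proof (wtopub _ Hw (Fin m)) as W. rewrite Ej in W. exact W.
    + destruct (TOPS a H eq_refl) as [ELt [Fn FO]].
      rewrite (HS6 _ Dl Hl Em). apply all_fin_Om. intros N.
      destruct (f (Fin N)) as [c|] eqn:Ec; [|exfalso; eapply Fn; eauto].
      apply (oble_trans _ (wr f (Fin (S c)))); [|apply (wtopub _ Hw)].
      apply wr_char; auto. rewrite Ec. simpl; lia.
  - intros a H EL n. simpl. fold f. destruct (TOPS a H EL) as [ELt [Fn FO]].
    destruct n as [|n']. rewrite (w0 _ Hw). discriminate.
    intro C. assert (C' : oble Om (wr f (Fin (S n')))) by (rewrite C; exact I).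
    apply wr_char in C'; auto. rewrite FO in C'. exact C'.
Qed.

Lemma case_l t : Pa t -> Pd t -> Pa (TL t) /\ Pd (TL t).
Proof.
  intros Ht Htd. assert (Hf := thI_eval_warp t). assert (Hw := wl_warp (eval thI t)).
  set (f := eval thI t) in *.
  assert (FIN : forall a n, D (App (TL t) a) -> d a = Fin n ->
            wl f (Fin n) = d (App (TL t) a)).
  { intros a n H E. assert (Ha := Dapp _ _ H).
    assert (H1 : D (App t (App (TL t) a))) by Dc.
    assert (H2 : D (App t (Pr (App (TL t) a)))) by Dc.
    assert (H3 : D (Pr (App (TL t) a))) by (apply (Dapp _ _ H2)).
    destruct n as [|p].
    - rewrite (w0 _ Hw). symmetry. apply (HS2 (TL t) a H Ha E).
    - assert (A1 : oblt (Fin 0) (Fin (S p))) by (apply oblt_nle; simpl; lia).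
      assert (A2 : oblt (Fin (S p)) Om) by (split; [exact I|discriminate]).
      destruct (d (App (TL t) a)) as [j|] eqn:Eq.
      + assert (A3 : oblt (Fin j) Om) by (split; [exact I|discriminate]).
        apply ob_eq_le. intros v. rewrite wl_char. split.
        * intros Hv. apply Hv. assert (L1' := HLa1 t a H1 H Ha).
          rewrite Eq, E in L1'. specialize (L1' A3). rewrite <- (Ht _ H1), Eq in L1'.
          exact L1'.
        * intros Hv r Hr. apply (oble_trans _ _ _ Hv). destruct j as [|j'].
          apply oble_0. apply NNPP; intro C. apply nS_le in C.
          assert (L2' := HLa2 t a H Ha H2). rewrite E, Eq in L2'.
          specialize (L2' A1 A2 A3). rewrite <- (Ht _ H2), (HS3 _ H3 H), Eq in L2'.
          simpl in L2'. fold f in L2'. apply oblt_nle in L2'. apply L2'.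
          apply (oble_trans _ _ _ Hr). apply (wmono _ Hf); auto.
      + assert (L3' := HLa3 t a H1 Ha H). rewrite E in L3'. specialize (L3' A2 Eq).
        rewrite <- (Ht _ H1), Eq in L3'. fold f in L3'.
        apply Om_le. apply wl_char. intros r Hr. exfalso. apply oblt_nle in L3'. apply L3'.
        apply (oble_trans _ _ _ Hr). apply (wtopub _ Hf). }
  assert (TOPS : forall a, D (App (TL t) a) -> d (Last (TL t)) = Om ->
     d (Last t) = Om /\ (forall n, f (Fin n) <> Om) /\ f Om = Om).
  { intros a H Em. assert (Hl : D (App (TL t) (Last (TL t)))) by Dc.
    assert (Dl : D (Last (TL t))) by (apply (DL _ _ H)).
    assert (H1 : D (App t (App (TL t) a))) by Dc.
    assert (ELt := HLa4 t Hl Dl (DL _ _ H1) Em).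
    split; auto. split. apply (Htd _ H1 ELt). apply (top_Om t _ Ht H1 ELt). }
  split.
  - intros a H. simpl. fold f. destruct (d a) as [n|] eqn:E. apply (FIN a); auto.
    assert (Hl : D (App (TL t) (Last (TL t)))) by Dc.
    assert (Dl : D (Last (TL t))) by (apply (DL _ _ H)).
    rewrite (top_eq _ _ H E).
    destruct (d (Last (TL t))) as [m|] eqn:Em.
    + rewrite <- (FIN _ m Hl Em). destruct (wl f (Fin m)) as [j|] eqn:Ej.
      * assert (H4 : D (App t (App (TL t) (Last (TL t))))) by Dc.
        assert (L5' := HLa5 t Hl H4). rewrite <- (FIN _ m Hl Em), Ej in L5'.
        assert (A3 : oblt (Fin j) Om) by (split; [exact I|discriminate]).
        specialize (L5' A3). rewrite <- (Ht _ H4) in L5'.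
        rewrite <- (FIN _ m Hl Em), Ej in L5'. fold f in L5'.
        apply oble_antisym.
        -- apply (wsup _ Hw). intros [|n']. rewrite (w0 _ Hw). apply oble_0.
           assert (C := oble_refl (wl f (Fin (S n')))). rewrite wl_char in C.
           apply C. rewrite L5'. apply oble_Om.
        -- rewrite <- Ej. apply (wtopub _ Hw).
      * apply Om_le. pose proof (wtopub _ Hw (Fin m)) as W. rewrite Ej in W. exact W.
    + destruct (TOPS a H eq_refl) as [ELt [Fn FO]].
      rewrite (HS6 _ Dl Hl Em). destruct (wl f Om) as [c|] eqn:Ec; auto.
      exfalso. apply (Fn c). apply wl_top; auto.
  - intros a H EL n. simpl. fold f. destruct (TOPS a H EL) as [ELt [Fn FO]].
    destruct n as [|n']. rewrite (w0 _ Hw). discriminate.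
    intro C. assert (C' : oble Om (wl f (Fin (S n')))) by (rewrite C; exact I).
    rewrite wl_char in C'. destruct (wreach _ Hf (S n')) as [m Hm]. rewrite FO; exact I.
    apply C' in Hm. exact Hm.
Qed.

Lemma main_ind t : Pa t /\ Pd t.
Proof.
  induction t.
  - apply case_var.
  - destruct IHt1, IHt2; apply case_comp; auto.
  - destruct IHt; apply case_o; auto.
  - destruct IHt; apply case_l; auto.
  - destruct IHt; apply case_r; auto.
  - apply case_id.
  - apply case_bot.
Qed.

End Bwd.

Definition finpart (o : ob) : nat := match o with Fin n => n | Om => 0 end.

Lemma bound_list (d : sample -> ob) (L : list sample) :
  forall s n, In s L -> d s = Fin n -> n <= fold_right (fun s acc => Nat.max (finpart (d s)) acc) 0 L.
Proof.
  induction L; simpl; intros s n H E; [tauto|].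
  destruct H as [->|H]. rewrite E; simpl; lia.
  specialize (IHL s n H E). lia.
Qed.

Theorem theorem3p19 (ts : list term) (k : nat) :
  (exists th : nat -> ob -> ob, (forall x, is_warp (th x)) /\
     exists p : ob, forall t, In t ts -> oblt (eval th t p) p)
  <->
  (exists d : sample -> ob,
     is_diagram (saturation (fun s => exists t, In t ts /\ s = App t (Kv k))) d /\
     forall t, In t ts -> oblt (d (App t (Kv k))) (d (Kv k))).
Proof.
  split.
  - intros [th [Hth [p Hp]]]. exists (dl th p). split.
    + apply fwd_diagram; auto.
    + intros t Ht. simpl. apply Hp; auto.
  - intros [d [Hd Hlt]].
    set (D := saturation (fun s => exists t, In t ts /\ s = App t (Kv k))) in *.
    assert (Dcl : forall s s', D s -> step s s' -> D s').
    { intros s s' [b [Hb Hr]] Hs. exists b. split; auto.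
      eapply rt_trans; eauto. apply rt_step; auto. }
    set (L := flat_map (fun t => lst t (Kv k)) ts).
    set (M := fold_right (fun s acc => Nat.max (finpart (d s)) acc) 0 L).
    assert (Hfin : forall s n, D s -> d s = Fin n -> n <= M).
    { intros s n Hs E. apply (bound_list d L s n); auto. apply sat_finite; auto. }
    destruct Hd as (HS1 & HS2 & HS3 & HS4 & HS5 & HS6 & HL1 & HL2 & HL3 & HL4 &
      HO1 & HO2 & HO3 & HO4 & HR1 & HR2 & HR3 & HR4 & HLa1 & HLa2 & HLa3 & HLa4 & HLa5).
    exists (thI D d M). split.
    + apply (thI_warp D d Dcl M Hfin HS1 HS2 HS5 HS6).
    + exists (d (Kv k)). intros t Ht.
      destruct (main_ind D d Dcl M Hfin HS1 HS2 HS3 HS4 HS5 HS6 HL1 HL2 HL3 HL4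
        HO1 HO2 HO3 HO4 HR1 HR2 HR3 HR4 HLa1 HLa2 HLa3 HLa4 HLa5 t) as [Pa' _].
      rewrite (Pa' (Kv k)). apply Hlt; auto.
      exists (App t (Kv k)). split. exists t; auto. apply rt_refl.
Qed.
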